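(* Let $u=0$, $\theta=1$ and $m\in\mathbb N$. If $y_1<y_2<0$, then $D_{y_1}\subseteq D_{y_2}$.
   Context: With $u=0$, $\theta=1$ and $m\in\mathbb N$ fixed, for $y<0$ let $D_y$ be the set of $\mu\in\mathbb C$ such that every root $\xi$ of the polynomial equation $\xi^{m+1}-\xi^m=y\,\xi^{m+1}-y\mu\,\xi$ satisfies $|\xi|<1$. *)

(* Defs.v *)
From mathcomp Require Import all_boot all_order all_algebra.
From mathcomp Require Import complex.
Set Implicit Arguments. Unset Strict Implicit. Unset Printing Implicit Defensive.
Import Order.TTheory GRing.Theory Num.Theory.
Local Open Scope ring_scope.
Local Open Scope complex_scope.

Definition D (R : rcfType) (m : nat) (y : R) : R[i] -> Prop :=
  fun mu => forall xi : R[i],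
    xi ^+ m.+1 - xi ^+ m = y%:C * xi ^+ m.+1 - y%:C * mu * xi ->
    `|xi| < 1.

(* Main.v *)
Require Import Defs.
From mathcomp Require Import all_boot all_order all_algebra.
From mathcomp Require Import complex.
From mathcomp Require Import ring lra.
Import Order.TTheory GRing.Theory Num.Theory.
Local Open Scope ring_scope.
Local Open Scope complex_scope.
Notation Rec := complex.Re.
Notation Imc := complex.Im.
Section H.
Variable R : rcfType.
Lemma ReD (u v : R[i]) : Rec (u + v) = Rec u + Rec v.
Proof. by case: u => a b; case: v => c d; simpc. Qed.
Lemma Re_div (a b c d : R) : Rec ((a +i* b) / (c +i* d)) = (a*c + b*d)/(c^+2+d^+2).
Proof. rewrite [(_ +i* _)^-1]/(invc _) /=. simpc. rewrite /=. ring. Qed.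
Lemma normc_lt1 (z : R[i]) : (`|z| < 1) = (Rec z ^+ 2 + Imc z ^+ 2 < 1).
Proof.
rewrite normc_def -[1 : R[i]]/((1:R)%:C) ltcR.
rewrite -{1}sqrtr1 ltr_sqrt //.
Qed.
Lemma factor_pos (z a : R[i]) : `|a| < 1 -> 1 <= Rec z ^+ 2 + Imc z ^+ 2 ->
  z - a != 0 /\ 0 < Rec (z / (z - a)).
Proof.
rewrite normc_lt1; case: z => x y; case: a => p q /= ha hz.
have -> : (x +i* y) - (p +i* q) = (x - p) +i* (y - q) by simpc.
have hd : 0 < (x - p) ^+ 2 + (y - q) ^+ 2.
  rewrite lt_neqAle addr_ge0 ?sqr_ge0 // andbT eq_sym.
  apply/negP => /eqP h0.
  have h1 : (x - p) ^+ 2 = 0 by apply/eqP; rewrite eq_le sqr_ge0 andbT; have := sqr_ge0 (y - q); lra.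
  have h2 : (y - q) ^+ 2 = 0 by apply/eqP; rewrite eq_le sqr_ge0 andbT; have := sqr_ge0 (x - p); lra.
  move/eqP: h1; move/eqP: h2; rewrite !expf_eq0 /= !subr_eq0 => /eqP hy /eqP hx.
  by move: ha; rewrite -hx -hy; lra.
split.
  apply/negP => /eqP [h1 h2]; move: hd; rewrite h1 h2; lra.
rewrite mulrN opprK !mulrA -mulrDl.
apply: divr_gt0 => //; nra.
Qed.
Lemma logder (rs : seq R[i]) (z : R[i]) :
  (forall a, a \in rs -> `|a| < 1) -> 1 <= Rec z ^+ 2 + Imc z ^+ 2 ->
  let Q := \prod_(a <- rs) ('X - a%:P) in
  Q.[z] != 0 /\ 0 <= Rec (z * Q^`().[z] / Q.[z]) /\
  (rs != [::] -> 0 < Rec (z * Q^`().[z] / Q.[z])).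
Proof.
move=> hrs hz; elim: rs hrs => [|a rs IH] hrs /=.
  rewrite big_nil -[1 : {poly R[i]}]/(1%:P) derivC horner0 hornerC mulr0 mul0r oner_eq0.
  by split => //; split => //; rewrite /=.
have [ha1 ha2] := factor_pos z a (hrs a (mem_head _ _)) hz.
have [h1 [h2 _]] := IH (fun b hb => hrs b (mem_behead (s:=a :: rs) hb)).
rewrite big_cons derivM derivXsubC mul1r !hornerE.
have hQ : (z - a) * (\prod_(j <- rs) ('X - j%:P)).[z] != 0 by rewrite mulf_neq0.
have -> : z * ((\prod_(j <- rs) ('X - j%:P)).[z] + (z - a) * (\prod_(j <- rs) ('X - j%:P))^`().[z]) /
   ((z - a) * (\prod_(j <- rs) ('X - j%:P)).[z]) = z / (z - a) + z * (\prod_(j <- rs) ('X - j%:P))^`().[z] / (\prod_(j <- rs) ('X - j%:P)).[z].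
  by field; rewrite ha1 h1.
rewrite ReD; split => //.
have h3 : 0 < Rec (z / (z - a)) + Rec (z * (\prod_(j <- rs) ('X - j%:P))^`().[z] / (\prod_(j <- rs) ('X - j%:P)).[z]).
  exact: ltr_wpDr.
by split => //; apply: ltW.
Qed.
End H.


Lemma Re_divr (R : rcfType) (u : R[i]) (r : R) : r != 0 -> Rec (u / r%:C) = Rec u / r.
Proof. move=> hr; case: u => a b; rewrite -[r%:C]/(r +i* 0) Re_div /=; field; exact: hr. Qed.

Lemma hxnL (F : comNzRingType) (xi : F) n : xi * (xi ^+ n.-1 *+ n) = xi ^+ n *+ n.
Proof. case: n => [|n']; first by rewrite !mulr0n mulr0.
by rewrite mulrnAr -exprS. Qed.

Theorem mainTheorem9 (R : rcfType) (m : nat) (hm : (0 < m)%N) (y1 y2 : R)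
  (hy12 : y1 < y2) (hy2 : y2 < 0) :
  forall mu : R[i], D m y1 mu -> D m y2 mu.
Proof.
move=> mu H1 xi Heq2.
case: m hm H1 Heq2 => // n _ H1 Heq2.
rewrite normc_lt1 ltNge; apply/negP => hz.
pose P : {poly R[i]} := (1 - y1%:C) *: 'X^(n.+1) - ('X^n) + (y1%:C * mu)%:P.
have hProot : forall a, P.[a] = 0 -> `|a| < 1.
  move=> a; rewrite /P !hornerE => ha; apply: H1.
  apply/eqP; rewrite -subr_eq0; apply/eqP.
  rewrite !exprS; rewrite !exprS in ha.
  transitivity (a * ((1 - y1%:C) * (a * a ^+ n) - a ^+ n + y1%:C * mu)); first by ring.
  by rewrite ha mulr0.
have hc1 : 1 - y1%:C != 0 :> R[i].
  rewrite -[1 : R[i]]/((1:R)%:C) -rmorphB fmorph_eq0 subr_eq0.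
  by apply/negP => /eqP h; move: hy12 hy2; rewrite -h; lra.
have hcoef : P`_n.+1 = 1 - y1%:C.
  rewrite /P !coefE eqxx.
  have -> : (n.+1 == n) = false by rewrite eqn_leq ltnn.
  by rewrite /= mulr1 subr0 addr0.
have hP0 : P != 0 by apply/negP => /eqP h; move: hcoef; rewrite h coef0 => /esym/eqP; rewrite (negbTE hc1).
have [rs Hrs] := closed_field_poly_normal P.
set c := lead_coef P in Hrs.
have hc : c != 0 by rewrite lead_coef_eq0.
have hrs1 : forall a, a \in rs -> `|a| < 1.
  move=> a ha; apply: hProot; rewrite Hrs hornerZ.
  by move: ha; rewrite -root_prod_XsubC => /eqP ->; rewrite mulr0.
have hrsn : rs != [::].
  apply/negP => /eqP hrs; move: hcoef; rewrite Hrs hrs big_nil coefZ coefC /= mulr0 => /esym/eqP.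
  by rewrite (negbTE hc1).
have [hQ [_ hpos]] := @logder R rs xi hrs1 hz.
move: {hpos}(hpos hrsn).
set Q := \prod_(a <- rs) ('X - a%:P).
have hPx : P.[xi] != 0 by rewrite Hrs hornerZ mulf_neq0.
have -> : xi * Q^`().[xi] / Q.[xi] = xi * P^`().[xi] / P.[xi].
  by rewrite Hrs derivZ !hornerZ; field; rewrite hc hQ.
have hxi0 : xi != 0.
  apply/negP => /eqP h; move: hz; rewrite h /= expr0n /=; lra.
have hy20 : y2 != 0 by rewrite lt_eqF.
pose w := xi ^+ n.
have E2 : xi * w - w = y2%:C * (xi * w) - y2%:C * mu.
  apply: (mulfI hxi0).
  transitivity (xi ^+ n.+2 - xi ^+ n.+1); first by rewrite /w !exprS; ring.
  by rewrite Heq2 /w !exprS; ring.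
pose k := y1 / y2.
have HK : y1%:C = k%:C * y2%:C by rewrite -rmorphM /k mulfVK.
have hPval : P.[xi] = w * (k%:C - 1) * (1 - xi).
  rewrite /P !hornerE HK exprS -/w.
  apply/eqP; rewrite -subr_eq0; apply/eqP.
  have E2' : xi * w - w - (y2%:C * (xi * w) - y2%:C * mu) = 0 by rewrite E2 subrr.
  transitivity (k%:C * (xi * w - w - (y2%:C * (xi * w) - y2%:C * mu))); first by ring.
  by rewrite E2' mulr0.
pose a0 := (1 - y1) * (n.+1)%:R.
have hdPval : xi * P^`().[xi] = w * (a0%:C * xi - (n%:R)%:C).
  rewrite /P !derivE !hornerE !hornerMn !hornerXn [n.+1.-1]/=.
  rewrite mulrBr hxnL /a0 rmorphM rmorphB rmorph1 !rmorph_nat /w -!(mulr_natr (xi ^+ n)).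
  ring.
rewrite hdPval hPval.
move: hPx; rewrite hPval !mulf_eq0 !negb_or => /andP [/andP [hw hk] h1x].
have hk1 : k%:C - 1 = (k - 1)%:C by rewrite rmorphB rmorph1.
have hk0 := hk; rewrite hk1 in hk.
have hk' : k - 1 != 0 by move: hk; apply: contra => /eqP ->; rewrite rmorph0.
have -> : w * (a0%:C * xi - (n%:R)%:C) / (w * (k%:C - 1) * (1 - xi)) =
   ((a0%:C * xi - (n%:R)%:C) / (1 - xi)) / (k - 1)%:C.
  by rewrite hk1; field; apply/and3P; split.
have hkpos : 0 < k - 1.
  have -> : k - 1 = (y2 - y1) / (- y2) by rewrite /k; field.
  by apply: divr_gt0; lra.
set u := (a0%:C * xi - (n%:R)%:C) / (1 - xi).
rewrite (@Re_divr R u (k - 1) hk').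
have hxi : forall z : R[i], z = Rec z +i* Imc z by case.
have ha0 : n%:R <= a0.
  rewrite /a0 mulrSr.
  have := ler0n R n; have : 0 <= - y1 * (n%:R + 1) by apply: mulr_ge0; [lra | have := ler0n R n; lra].
  nra.
have hn0 := ler0n R n.
rewrite /u (hxi xi); move: hz; move: (Rec xi) (Imc xi) => x y hz.
have -> : (a0%:C * (x +i* y) - (n%:R)%:C) / (1 - (x +i* y)) = ((a0 * x - n%:R) +i* (a0 * y)) / ((1 - x) +i* (- y)).
  by congr (_ / _); simpc.
rewrite Re_div => hpos.
have hnum : (a0 * x - n%:R) * (1 - x) + a0 * y * - y <= 0.
  have h1 : 0 <= (a0 + n%:R) * ((x - 1) ^+ 2 + y ^+ 2) by apply: mulr_ge0; [lra | apply: addr_ge0; apply: sqr_ge0].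
  have h2 : 0 <= (a0 - n%:R) * (x ^+ 2 + y ^+ 2 - 1) by apply: mulr_ge0; lra.
  nra.
have hden : 0 <= (1 - x) ^+ 2 + (- y) ^+ 2 by apply: addr_ge0; apply: sqr_ge0.
have hle : ((a0 * x - n%:R) * (1 - x) + a0 * y * - y) / ((1 - x) ^+ 2 + (- y) ^+ 2) / (k - 1) <= 0.
  apply: mulr_le0_ge0; last by rewrite invr_ge0 ltW.
  by apply: mulr_le0_ge0; last by rewrite invr_ge0.
by move: hpos; rewrite ltNge hle.
Qed.
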